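(* Let $(X,d,\preccurlyeq)$ be a preordered $s$-regular $b$-metric space. Let $T,S:X\to X$ be self mappings and suppose there exists $x_0\in X$ such that $T(x_0)\succcurlyeq S(x_0)$. Suppose that: (i) $T$ is isotone; (ii) $S$ covers $T$ from above on the set $O^*_X(x_0)$; (iii) every chain $C\in\mathcal{C}^*(x_0,T,S,\preccurlyeq)$ has an upper bound $w\in X$ (i.e. $x\preccurlyeq w$ for all $x\in C$) satisfying $w\succcurlyeq T(w)$, and there exists $z\in X$ such that $S^i(z)\succcurlyeq S(w)\succcurlyeq T(w)$ for all $i\in\mathbb{N}$ and $d(T^i(w),S^i(z))\to 0$ as $i\to\infty$. Then the set $\mathrm{Coin}(T,S)\cap O^*_X(x_0)$ is nonempty and contains a maximal element.
   Context: A $b$-metric space with coefficient $s\ge 1$ is a nonempty set $X$ with a function $d:X\times X\to[0,\infty)$ such that for all $x,y,z\in X$: $d(x,y)=0$ iff $x=y$; $d(x,y)=d(y,x)$; $d(x,y)\le s[d(x,z)+d(z,y)]$. A preorder is a reflexive and transitive binary relation $\preccurlyeq$; $x\succcurlyeq y$ means $y\preccurlyeq x$, and $x\prec y$ means $x\preccurlyeq y$ and $x\ne y$. A preordered $s$-regular $b$-metric space $(X,d,\preccurlyeq)$ is a $b$-metric space with coefficient $s\ge1$ equipped with a preorder $\preccurlyeq$ such that for all $x,y,z\in X$, $x\preccurlyeq y\preccurlyeq z$ implies $\max\{d(x,y),d(y,z)\}\le s^2 d(x,z)$. A chain is a subset of $X$ any two elements of which are comparable. A map $T$ is isotone if $x\preccurlyeq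 y$ implies $T(x)\preccurlyeq T(y)$. $T^i$ denotes the $i$-th iterate. For $x_0\in X$, $O^*_X(x_0)=\{x\in X: x\succcurlyeq x_0\}$. $\mathrm{Coin}(T,S)=\{x: T(x)=S(x)\}$. A map $S$ covers a map $T$ from above on a set $A\subset X$ if for every $x\in A$ with $T(x)\succcurlyeq S(x)$ there exists $y\in X$ with $y\succcurlyeq x$ and $S(y)=T(x)$. $\mathcal{C}^*(T,S,\preccurlyeq)$ is the set of chains $C\subset X$ such that for all $x,y\in C$: $T(x)\succcurlyeq S(x)$; $x\prec y$ implies $T(x)\preccurlyeq S(y)$; and $S(C)\subset T(X)$. $\mathcal{C}^*(x_0,T,S,\preccurlyeq)=\{C\in\mathcal{C}^*(T,S,\preccurlyeq): C\subset O^*_X(x_0)\text{ and } S(C)\subset T(O^*_X(x_0))\}$. A maximal element of a set $A\subset X$ is an element $w\in A$ such that there is no $u\in A$ with $w\prec u$. *)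

(* Defs.v *)
From Stdlib Require Import Reals.
Open Scope R_scope.

Definition is_b_metric {X : Type} (d : X -> X -> R) (s : R) : Prop :=
  1 <= s /\
  (forall x y, 0 <= d x y) /\
  (forall x y, d x y = 0 <-> x = y) /\
  (forall x y, d x y = d y x) /\
  (forall x y z, d x y <= s * (d x z + d z y)).

Definition is_preorder {X : Type} (le : X -> X -> Prop) : Prop :=
  (forall x, le x x) /\ (forall x y z, le x y -> le y z -> le x z).

Definition preordered_s_regular_bms {X : Type} (d : X -> X -> R) (s : R)
  (le : X -> X -> Prop) : Prop :=
  is_b_metric d s /\ is_preorder le /\
  (forall x y z, le x y -> le y z ->
     Rmax (d x y) (d y z) <= s ^ 2 * d x z).

Definition strict {X : Type} (le : X -> X -> Prop) (x y : X) : Prop :=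
  le x y /\ x <> y.

Definition is_chain {X : Type} (le : X -> X -> Prop) (C : X -> Prop) : Prop :=
  forall x y, C x -> C y -> le x y \/ le y x.

Definition isotone {X : Type} (le : X -> X -> Prop) (T : X -> X) : Prop :=
  forall x y, le x y -> le (T x) (T y).

Definition Ostar {X : Type} (le : X -> X -> Prop) (x0 : X) (x : X) : Prop :=
  le x0 x.

Definition Coin {X : Type} (T S : X -> X) (x : X) : Prop := T x = S x.

Definition covers_from_above {X : Type} (le : X -> X -> Prop) (S T : X -> X)
  (A : X -> Prop) : Prop :=
  forall x, A x -> le (S x) (T x) -> exists y, le x y /\ S y = T x.

Definition Cstar {X : Type} (le : X -> X -> Prop) (T S : X -> X)
  (C : X -> Prop) : Prop :=
  is_chain le C /\
  (forall x, C x -> le (S x) (T x)) /\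
  (forall x y, C x -> C y -> strict le x y -> le (T x) (S y)) /\
  (forall x, C x -> exists u, S x = T u).

Definition Cstar0 {X : Type} (le : X -> X -> Prop) (x0 : X) (T S : X -> X)
  (C : X -> Prop) : Prop :=
  Cstar le T S C /\
  (forall x, C x -> Ostar le x0 x) /\
  (forall x, C x -> exists u, Ostar le x0 u /\ S x = T u).

Definition maximal_in {X : Type} (le : X -> X -> Prop) (A : X -> Prop)
  (w : X) : Prop :=
  A w /\ ~ (exists u, A u /\ strict le w u).

(* Main.v *)
Require Import Defs.
From Stdlib Require Import Reals Lra.
From Stdlib Require Import ProofIrrelevance.
From mathcomp Require Import all_boot.
From mathcomp Require Import boolp classical_sets.
Open Scope R_scope.

Lemma key_coin (X : Type) (d : X -> X -> R) (s : R) (le : X -> X -> Prop)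
  (T S : X -> X) (w z : X) :
  preordered_s_regular_bms d s le -> isotone le T ->
  le (T w) w -> (forall i : nat, le (S w) (Nat.iter i S z)) -> le (T w) (S w) ->
  Un_cv (fun i : nat => d (Nat.iter i T w) (Nat.iter i S z)) 0 ->
  T w = S w.
Proof.
move=> [[s1 [d0 [dz _]]] [[refl trans] reg]] iso Tw Sz TS cv.
have itw : forall i, le (Nat.iter i T w) w.
  elim=> [|i IH] /=; first exact: refl.
  apply: trans Tw; exact: iso.
have bnd : forall n, d (T w) (S w) <= s ^ 2 * (s ^ 2 * d (Nat.iter n.+1 T w) (Nat.iter n.+1 S z)).
  move=> n.
  have h1 : le (Nat.iter n.+1 T w) (T w) by apply: iso; apply: itw.
  have h2 : le (T w) (Nat.iter n.+1 S z) by apply: trans TS (Sz _).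
  have r1 := reg _ _ _ h1 h2.
  have r2 := reg _ _ _ TS (Sz n.+1).
  have s2 : 0 <= s ^ 2 by apply: pow_le; lra.
  have e1 := Rmax_r (d (Nat.iter n.+1 T w) (T w)) (d (T w) (Nat.iter n.+1 S z)).
  have e2 := Rmax_l (d (T w) (S w)) (d (S w) (Nat.iter n.+1 S z)).
  apply: Rle_trans (Rle_trans _ _ _ e2 r2) _.
  apply: Rmult_le_compat_l => //; lra.
apply/dz.
have s4 : 0 < s ^ 2 * s ^ 2 by apply: Rmult_lt_0_compat; apply: pow_lt; lra.
have ge := d0 (T w) (S w).
apply: Rle_antisym => //.
apply: Rnot_lt_le => Hlt.
have [N HN] := cv (d (T w) (S w) / (s ^ 2 * s ^ 2)) (ltac:(apply: Rdiv_lt_0_compat; lra)).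
have := HN N.+1 (Nat.le_succ_diag_r N).
rewrite /R_dist Rminus_0_r => Habs.
have := bnd N.
have := Rle_abs (d (Nat.iter N.+1 T w) (Nat.iter N.+1 S z)).
move=> a b.
have : d (Nat.iter N.+1 T w) (Nat.iter N.+1 S z) < d (T w) (S w) / (s ^ 2 * s ^ 2) by lra.
move=> c.
have : s ^ 2 * s ^ 2 * d (Nat.iter N.+1 T w) (Nat.iter N.+1 S z) < d (T w) (S w).
  have := Rmult_lt_compat_l _ _ _ s4 c.
  have E : d (T w) (S w) = s ^ 2 * s ^ 2 * (d (T w) (S w) / (s ^ 2 * s ^ 2)) by field; lra.
  move=> h; lra.
lra.
Qed.

Theorem theorem2p2 (X : Type) (d : X -> X -> R) (s : R) (le : X -> X -> Prop)
  (T S : X -> X) (x0 : X) :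
  preordered_s_regular_bms d s le ->
  le (S x0) (T x0) ->
  isotone le T ->
  covers_from_above le S T (Ostar le x0) ->
  (forall C : X -> Prop, Cstar0 le x0 T S C ->
     exists w : X,
       (forall x, C x -> le x w) /\ le (T w) w /\
       exists z : X,
         (forall i : nat, le (S w) (Nat.iter i S z)) /\ le (T w) (S w) /\
         Un_cv (fun i : nat => d (Nat.iter i T w) (Nat.iter i S z)) 0) ->
  (exists x, Coin T S x /\ Ostar le x0 x) /\
  (exists w, maximal_in le (fun x => Coin T S x /\ Ostar le x0 x) w).
Proof.
move=> H Sx0 iso cov hyp.
have HH := H.
move: HH => [[s1 [d0 [dz [dsym _]]]] [[refl trans] reg]].
have anti : forall a b, le a b -> le b a -> a = b.
  move=> a b ab ba; apply/dz.
  have := reg _ _ _ ab ba; rewrite (proj2 (dz a a) erefl).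
  have := Rmax_l (d a b) (d b a); have := d0 a b.
  have -> : s ^ 2 * 0 = 0 by ring.
  lra.
have first : exists x, Coin T S x /\ Ostar le x0 x.
  have [y [x0y Sy]] := cov x0 (refl x0) Sx0.
  have Cy : Cstar0 le x0 T S (fun x => x = y).
    split; [split; [|split; [|split]]|split].
    - by move=> a b -> ->; left; apply: refl.
    - by move=> a ->; rewrite Sy; apply: iso.
    - by move=> a b -> -> [_ []].
    - by move=> a ->; exists x0.
    - by move=> a ->.
    - by move=> a ->; exists x0; split=> //; apply: refl.
  have [w [ub [Tw [z [Sz [TS cv]]]]]] := hyp _ Cy.
  exists w; split; first exact: (key_coin _ _ _ _ _ _ _ _ H iso Tw Sz TS cv).
  by apply: trans x0y (ub y erefl).
split => //.
have [e [Ce Oe]] := first.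
pose P := fun x => Coin T S x /\ Ostar le x0 x.
pose U := {x : X | P x}.
pose Rl := fun a b : U => `[< le (proj1_sig a) (proj1_sig b) >].
have [t Ht] : exists t, forall s, Rl t s -> s = t.
apply: Zorn.
- by move=> a; apply/asboolP; apply: refl.
- by move=> a b c /asboolP ab /asboolP bc; apply/asboolP; apply: trans ab bc.
- move=> [a pa] [b pb] /asboolP /= ab /asboolP /= ba.
  have eab := anti _ _ ab ba; subst b.
  by rewrite (proof_irrelevance _ pa pb).
- move=> A tot.
  pose C := fun x => exists p : P x, A (exist _ x p).
  case: (pselect (exists x, C x)) => [[x1 [p1 Ax1]]|noC]; last first.
    exists (exist _ e (conj Ce Oe)) => b Ab; exfalso; apply: noC.
    by case: b Ab => b pb Ab; exists b, pb.
  have CC : Cstar0 le x0 T S C.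
    split; [split; [|split; [|split]]|split].
    - move=> a b [pa Aa] [pb Ab].
      by case: (tot _ _ Aa Ab) => /asboolP /= h; [left|right].
    - by move=> a [[pa _] _]; rewrite pa; apply: refl.
    - move=> a b [[_ _] _] [[pb _] _] [ab _]; rewrite -pb; exact: iso.
    - by move=> a [[pa _] _]; exists a.
    - by move=> a [[_ pa] _].
    - by move=> a [[pa oa] _]; exists a.
  have [w [ub [Tw [z [Sz [TS cv]]]]]] := hyp _ CC.
  have cw := key_coin _ _ _ _ _ _ _ _ H iso Tw Sz TS cv.
  have ow : Ostar le x0 w by apply: trans (ub x1 (ex_intro _ p1 Ax1)); exact: (proj2 p1).
  exists (exist _ w (conj cw ow)) => [[b pb] Ab]; apply/asboolP => /=.
  by apply: ub; exists pb.
exists (proj1_sig t); split; first exact: (proj2_sig t).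
move=> [u [Pu [tu ntu]]].
have := Ht (exist _ u Pu) (asboolT tu).
by move=> eq; apply: ntu; rewrite -eq.
Qed.
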